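(* Let $R$ be an $\mathbb{N}$-graded domain finitely generated over the field $R_0$, and let $M\neq0$ be a finitely generated $\mathbb{Z}$-graded $R$-module. Then not every element of $M$ is almost zero.
   Context: $R^{+\mathrm{GR}}$ is the maximal $\mathbb{Q}_{\ge0}$-graded subring of the absolute integral closure $R^+$ (integral closure of $R$ in an algebraic closure of its fraction field) extending the grading of $R$; $\nu(a)$ is the degree of the lowest nonzero homogeneous component of $a\in R^{+\mathrm{GR}}$. An element $m\in M$ is almost zero if for every $\varepsilon>0$ the element $m\otimes1\in M\otimes_R R^{+\mathrm{GR}}$ is annihilated by some nonzero $a\in R^{+\mathrm{GR}}$ with $\nu(a)<\varepsilon$. *)

(* Defs.v *)
From HB Require Import structures.
From mathcomp Require Import all_boot all_order all_algebra.
Set Implicit Arguments. Unset Strict Implicit. Unset Printing Implicit Defensive.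
Import Order.TTheory GRing.Theory Num.Theory.
Local Open Scope ring_scope.

Definition additive_sub (V : zmodType) (P : V -> Prop) : Prop :=
  P 0 /\ (forall x y, P x -> P y -> P (x - y)).

Definition graded_decomp (I : eqType) (V : zmodType)
    (T : V -> Prop) (C : I -> V -> Prop) (D : I -> Prop) : Prop :=
  (forall i, additive_sub (C i)) /\
  (forall i x, C i x -> T x) /\
  (forall x, T x -> exists (l : seq I) (f : I -> V),
      uniq l /\ (forall i, i \in l -> D i /\ C i (f i)) /\
      x = \sum_(i <- l) f i) /\
  (forall (l : seq I) (f : I -> V), uniq l ->
      (forall i, i \in l -> C i (f i)) -> \sum_(i <- l) f i = 0 ->
      forall i, i \in l -> f i = 0).

Definition Ngraded_ring (R : pzRingType) (Rn : nat -> R -> Prop) : Prop :=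
  graded_decomp (fun _ => True) Rn (fun _ => True) /\
  (forall i j x y, Rn i x -> Rn j y -> Rn (i + j)%N (x * y)).

Definition degree0_is_field (R : pzRingType) (Rn : nat -> R -> Prop) : Prop :=
  forall x, Rn 0%N x -> x != 0 -> exists y, Rn 0%N y /\ x * y = 1.

(* R is generated as a ring by R_0 together with finitely many elements *)
Definition fg_over_degree0 (R : pzRingType) (Rn : nat -> R -> Prop) : Prop :=
  exists gens : seq R, forall P : R -> Prop,
    (forall x, Rn 0%N x -> P x) -> (forall g, g \in gens -> P g) ->
    (forall x y, P x -> P y -> P (x + y)) ->
    (forall x y, P x -> P y -> P (x * y)) ->
    forall r, P r.

Definition Zgraded_module (R : pzRingType) (Rn : nat -> R -> Prop)
    (M : lmodType R) (Mz : int -> M -> Prop) : Prop :=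
  graded_decomp (fun _ => True) Mz (fun _ => True) /\
  (forall (n : nat) (z : int) r m, Rn n r -> Mz z m -> Mz (z + n%:Z) (r *: m)).

Definition fg_module (R : pzRingType) (M : lmodType R) : Prop :=
  exists gens : seq M, forall m : M, exists cs : seq R,
    m = \sum_(i < size gens) cs`_i *: gens`_i.

Section Closure.
Variables (R : comPzRingType) (K : fieldType) (iota : {rmorphism R -> K}).

Definition coefs_in_R (p : {poly K}) : Prop :=
  forall i, exists r : R, p`_i = iota r.

(* K is algebraic over (the fraction field of) iota(R) *)
Definition algebraic_over : Prop :=
  forall k : K, exists p : {poly K}, p != 0 /\ coefs_in_R p /\ root p k.

(* k lies in R^+, the integral closure of iota(R) in K *)
Definition integral_over_R (k : K) : Prop :=
  exists p : {poly K}, p \is monic /\ coefs_in_R p /\ root p k.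

(* (S, (S_q)_q) is a Q_{>=0}-graded subring of R^+ extending the grading Rn *)
Definition Qgraded_ext (Rn : nat -> R -> Prop)
    (S : K -> Prop) (Sq : rat -> K -> Prop) : Prop :=
  (forall k, S k -> integral_over_R k) /\
  S 1 /\ (forall x y, S x -> S y -> S (x - y)) /\
  (forall x y, S x -> S y -> S (x * y)) /\
  (forall q, q < 0 -> forall x, Sq q x -> x = 0) /\
  graded_decomp S Sq (fun q => 0 <= q) /\
  (forall q r x y, Sq q x -> Sq r y -> Sq (q + r) (x * y)) /\
  (forall (n : nat) r, Rn n r -> Sq n%:R (iota r)).

Definition max_Qgraded_ext (Rn : nat -> R -> Prop)
    (S : K -> Prop) (Sq : rat -> K -> Prop) : Prop :=
  Qgraded_ext Rn S Sq /\
  forall (S' : K -> Prop) (Sq' : rat -> K -> Prop),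
    Qgraded_ext Rn S' Sq' ->
    (forall k, S k -> S' k) -> (forall q k, Sq q k -> Sq' q k) ->
    forall k, S' k -> S k.

(* nu a = q : q is the degree of the lowest nonzero homogeneous component *)
Definition nu_is (Sq : rat -> K -> Prop) (a : K) (q : rat) : Prop :=
  exists (l : seq rat) (f : rat -> K),
    uniq l /\ (forall i, i \in l -> Sq i (f i)) /\ a = \sum_(i <- l) f i /\
    q \in l /\ f q != 0 /\ (forall i, i \in l -> f i != 0 -> q <= i).

End Closure.

(* ---------- the tensor product M (x)_R S, as a quotient of the free
   R-module on M x S by the bilinearity relations ---------- *)

Inductive trel (R M K : Type) :=
| TAddL of M & M & K
| TAddR of M & K & K
| TScalL of R & M & K
| TScalR of R & M & K.

Section Tensor.
Variables (R : comPzRingType) (M : lmodType R) (K : fieldType)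
  (iota : {rmorphism R -> K}).

(* basis element [m (x) a] of the free module, as a function M -> K -> R *)
Definition tdelta (m : M) (a : K) : M -> K -> R :=
  fun x y => ((x == m) && (y == a))%:R.

Definition trel_eval (t : trel R M K) : M -> K -> R :=
  match t with
  | TAddL x1 x2 y => fun x' y' =>
      tdelta (x1 + x2) y x' y' - tdelta x1 y x' y' - tdelta x2 y x' y'
  | TAddR x y1 y2 => fun x' y' =>
      tdelta x (y1 + y2) x' y' - tdelta x y1 x' y' - tdelta x y2 x' y'
  | TScalL r x y => fun x' y' => tdelta (r *: x) y x' y' - r * tdelta x y x' y'
  | TScalR r x y => fun x' y' => tdelta x (iota r * y) x' y' - r * tdelta x y x' y'
  end.

Definition trel_in (S : K -> Prop) (t : trel R M K) : Prop :=
  match t with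
  | TAddL _ _ y => S y
  | TAddR _ y1 y2 => S y1 /\ S y2
  | TScalL _ _ y => S y
  | TScalR _ _ y => S y
  end.

(* m (x) a = 0 in M (x)_R S  (for a in S) *)
Definition tensor_zero (S : K -> Prop) (m : M) (a : K) : Prop :=
  exists s : seq (R * trel R M K),
    foldr (fun p P => trel_in S p.2 /\ P) True s /\
    forall x y, tdelta m a x y = \sum_(p <- s) p.1 * trel_eval p.2 x y.

(* m is almost zero: for every eps > 0, m (x) 1 is killed by some nonzero
   a in S with nu(a) < eps; note a . (m (x) 1) = m (x) a. *)
Definition almost_zero (S : K -> Prop) (Sq : rat -> K -> Prop) (m : M) : Prop :=
  forall eps : rat, 0 < eps ->
    exists a : K, S a /\ a != 0 /\ (exists q, nu_is Sq a q /\ q < eps) /\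
      tensor_zero S m a.

End Tensor.

(* Main.v *)
Require Import Defs.
From HB Require Import structures.
From mathcomp Require Import all_boot all_order all_algebra.
From mathcomp Require Import zify ring lra.
From Stdlib Require Import ClassicalEpsilon.
Set Implicit Arguments. Unset Strict Implicit. Unset Printing Implicit Defensive.
Import Order.TTheory GRing.Theory Num.Theory.
Local Open Scope ring_scope.

Section Comp.
Variables (I : eqType) (V : zmodType) (T : V -> Prop) (C : I -> V -> Prop) (D : I -> Prop).
Hypothesis gd : graded_decomp T C D.

Definition decP (x : V) (lf : seq I * (I -> V)) : Prop :=
  uniq lf.1 /\ (forall i, i \in lf.1 -> C i (lf.2 i)) /\ x = \sum_(i <- lf.1) lf.2 i.

Definition gcomp (i : I) (x : V) : V :=
  let lf := epsilon (inhabits ([::], fun _ => 0)) (decP x) in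
  if i \in lf.1 then lf.2 i else 0.

Lemma C0 i : C i 0.
Proof. case: gd => H _; by case: (H i). Qed.

Lemma CB i x y : C i x -> C i y -> C i (x - y).
Proof. case: gd => H _; case: (H i) => _ H2; exact: H2. Qed.

Lemma CD i x y : C i x -> C i y -> C i (x + y).
Proof.
move=> Hx Hy; have := CB Hx (CB (C0 i) Hy). by rewrite sub0r opprK.
Qed.

Lemma sum_sup (l L : seq I) (F : I -> V) :
  uniq l -> uniq L -> {subset l <= L} -> (forall i, i \notin l -> F i = 0) ->
  \sum_(i <- L) F i = \sum_(i <- l) F i.
Proof.
move=> ul uL sub F0.
rewrite (bigID (fun i => i \in l)) /= [X in _ + X]big1_seq ?addr0; last first.
  by move=> i /andP [/F0].
rewrite -big_filter; apply: perm_big; apply: uniq_perm.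
- exact: filter_uniq.
- done.
by move=> i; rewrite mem_filter; case: (boolP (i \in l)) => // /sub ->.
Qed.

Definition ext (l : seq I) (f : I -> V) (i : I) := if i \in l then f i else 0.

Lemma ext0 l f i : i \notin l -> ext l f i = 0.
Proof. by rewrite /ext => /negbTE ->. Qed.

Lemma ext_sum l f : \sum_(i <- l) ext l f i = \sum_(i <- l) f i.
Proof. by rewrite big_seq_cond [RHS]big_seq_cond; apply: eq_bigr => i /andP [] Hi _; rewrite /ext Hi. Qed.

Lemma extC l f : (forall i, i \in l -> C i (f i)) -> forall i, C i (ext l f i).
Proof. by move=> H i; rewrite /ext; case: ifP => [/H|_] //; apply: C0. Qed.

Lemma uniqueness (l1 l2 : seq I) f1 f2 : uniq l1 -> uniq l2 ->
  (forall i, i \in l1 -> C i (f1 i)) -> (forall i, i \in l2 -> C i (f2 i)) ->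
  \sum_(i <- l1) f1 i = \sum_(i <- l2) f2 i -> forall i, ext l1 f1 i = ext l2 f2 i.
Proof.
move=> u1 u2 C1 C2 E i.
pose L := undup (l1 ++ l2).
have uL : uniq L by apply: undup_uniq.
have s1 : {subset l1 <= L} by move=> j Hj; rewrite mem_undup mem_cat Hj.
have s2 : {subset l2 <= L} by move=> j Hj; rewrite mem_undup mem_cat Hj orbT.
have H0 : \sum_(j <- L) (ext l1 f1 j - ext l2 f2 j) = 0.
  rewrite sumrB (sum_sup u1 uL s1 (@ext0 l1 f1)) (sum_sup u2 uL s2 (@ext0 l2 f2)).
  by rewrite !ext_sum E subrr.
have Hc : forall j, j \in L -> C j (ext l1 f1 j - ext l2 f2 j).
  by move=> j _; apply: CB; apply: extC.
case: (boolP (i \in L)) => iL.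
  case: gd => _ [_ [_ H]]; apply/eqP; rewrite -subr_eq0; apply/eqP.
  exact: (H L (fun j => ext l1 f1 j - ext l2 f2 j) uL Hc H0 i iL).
rewrite !ext0 //; apply/negP => Hi; move/negP: iL; apply; [exact: s2|exact: s1].
Qed.

Lemma comp_spec x l f : T x -> uniq l -> (forall i, i \in l -> C i (f i)) ->
  x = \sum_(i <- l) f i -> forall i, gcomp i x = ext l f i.
Proof.
move=> Tx ul Cl E i; rewrite /gcomp.
set lf := epsilon _ _.
have : decP x lf.
  apply: epsilon_spec; case: gd => _ [_ [H _]].
  have [l' [f' [u' [H' E']]]] := H x Tx.
  exists (l', f'); split => //; split => // j /H' []; done.
rewrite /decP => -[u' [C' E']].
change ((if i \in lf.1 then lf.2 i else 0) = ext l f i).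
change (ext lf.1 lf.2 i = ext l f i).
apply: uniqueness => //; by rewrite -E'.
Qed.

Lemma comp_homog j x i : C j x -> gcomp i x = if i == j then x else 0.
Proof.
move=> Cx; have Tx : T x by case: gd => _ [H _]; exact: H Cx.
rewrite (@comp_spec x [:: j] (fun _ => x)) //.
- by rewrite /ext inE.
- by move=> k; rewrite inE => /eqP ->.
by rewrite big_seq1.
Qed.

Lemma comp0 i : gcomp i 0 = 0.
Proof. by rewrite (comp_homog i (C0 i)); case: eqP. Qed.

Lemma comp_in x i : T x -> C i (gcomp i x).
Proof.
move=> Tx; case: gd => _ [_ [H _]].
have [l [f [u [H' E]]]] := H x Tx.
rewrite (comp_spec Tx u _ E); first apply: extC.
all: by move=> j /H' [].
Qed.

Lemma comp_sum x : T x -> exists l, uniq l /\ x = \sum_(i <- l) gcomp i x /\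
   forall i, i \notin l -> gcomp i x = 0.
Proof.
move=> Tx; case: gd => _ [_ [H _]].
have [l [f [u [H' E]]]] := H x Tx.
have Cf : forall i, i \in l -> C i (f i) by move=> j /H' [].
exists l; split => //; split.
  by rewrite {1}E -ext_sum; apply: eq_bigr => i _; rewrite (comp_spec Tx u Cf E).
by move=> i Hi; rewrite (comp_spec Tx u Cf E) ext0.
Qed.

Lemma comp_add x y i : T x -> T y -> T (x + y) -> gcomp i (x + y) = gcomp i x + gcomp i y.
Proof.
move=> Tx Ty Txy.
have [l1 [u1 [E1 Z1]]] := comp_sum Tx.
have [l2 [u2 [E2 Z2]]] := comp_sum Ty.
pose L := undup (l1 ++ l2).
have uL : uniq L by apply: undup_uniq.
have s1 : {subset l1 <= L} by move=> j Hj; rewrite mem_undup mem_cat Hj.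
have s2 : {subset l2 <= L} by move=> j Hj; rewrite mem_undup mem_cat Hj orbT.
have E : x + y = \sum_(j <- L) (gcomp j x + gcomp j y).
  by rewrite big_split /= (sum_sup u1 uL s1 Z1) (sum_sup u2 uL s2 Z2) -E1 -E2.
rewrite (comp_spec Txy uL _ E); last by move=> j _; apply: CD; apply: comp_in.
rewrite /ext; case: ifP => // /negbT iL.
rewrite Z1 ?Z2 ?addr0 //; apply/negP => Hi; move/negP: iL; apply; [exact: s2|exact: s1].
Qed.

End Comp.

Lemma sum_one (I : eqType) (V : zmodType) (l : seq I) (H : I -> V) i0 :
  uniq l -> (forall i, i \in l -> i != i0 -> H i = 0) -> (i0 \notin l -> H i0 = 0) ->
  \sum_(i <- l) H i = H i0.
Proof.
move=> ul Hn H0; case: (boolP (i0 \in l)) => Hi.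
  rewrite (bigD1_seq i0) //= big1_seq ?addr0 // => i /andP [] ne il; exact: Hn.
rewrite H0 // big1_seq // => i /andP [] _ Hil; apply: Hn => //.
by apply/eqP => E; move: Hi; rewrite -E Hil.

Qed.

Section Comp2.
Variables (I : eqType) (V : zmodType) (T : V -> Prop) (C : I -> V -> Prop) (D : I -> Prop).
Hypothesis gd : graded_decomp T C D.
Hypothesis T0 : T 0.
Hypothesis Tadd : forall x y, T x -> T y -> T (x + y).

Lemma comp_bigsum (J : Type) (s : seq J) (F : J -> V) i :
  (forall k, T (F k)) -> gcomp C i (\sum_(k <- s) F k) = \sum_(k <- s) gcomp C i (F k).
Proof.
move=> HT; elim: s => [|k s IH]; first by rewrite !big_nil (comp0 gd).
have Ts : forall s, T (\sum_(k <- s) F k).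
  by elim=> [|k' s' IH']; rewrite ?big_nil ?big_cons //; apply: Tadd.
by rewrite !big_cons (comp_add gd) ?IH //; apply: Tadd.
Qed.
End Comp2.

Section Shift.
Variables (I : zmodType) (V : zmodType) (T : V -> Prop) (C : I -> V -> Prop) (D : I -> Prop).
Hypothesis gd : graded_decomp T C D.
Hypothesis T0 : T 0.
Hypothesis Tadd : forall x y, T x -> T y -> T (x + y).

Lemma comp_shift (phi : V -> V) (e : I) z j :
  (forall x y, phi (x + y) = phi x + phi y) -> phi 0 = 0 ->
  (forall k x, C k x -> C (k + e) (phi x)) -> T z ->
  gcomp C j (phi z) = phi (gcomp C (j - e) z).
Proof.
move=> phiD phi0 phiC Tz.
have [l [ul [E Z]]] := comp_sum gd Tz.
have -> : phi z = \sum_(k <- l) phi (gcomp C k z).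
  by rewrite {1}E; apply: big_morph.
have TC : forall k x, C k x -> T x by case: gd => _ [H _].
rewrite (comp_bigsum gd T0 Tadd); last by move=> k; apply: TC (phiC _ _ (comp_in gd _ Tz)).
rewrite (@sum_one _ _ _ _ (j - e)) //.
- by rewrite (comp_homog gd j (phiC _ _ (comp_in gd _ Tz))) subrK eqxx.
- move=> k _ ne; rewrite (comp_homog gd j (phiC _ _ (comp_in gd _ Tz))).
  case: eqP => // E'; move/eqP: ne; rewrite E' addrK; by case.
by move=> ni; rewrite Z // phi0 (comp0 gd).
Qed.
End Shift.

Section Lin.
Variables (R : comPzRingType) (M : lmodType R) (P : R -> Prop).
Hypothesis P0 : P 0.
Hypothesis PB : forall x y, P x -> P y -> P (x - y).
Hypothesis PM : forall x y, P x -> P y -> P (x * y).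
Hypothesis Pinv : forall x, P x -> x != 0 -> exists y, P y /\ x * y = 1.

Fixpoint inspan (g : seq M) (v : M) : Prop :=
  match g with
  | [::] => v = 0
  | w :: g' => exists c u, P c /\ inspan g' u /\ v = c *: w + u
  end.

Lemma PD x y : P x -> P y -> P (x + y).
Proof. move=> Hx Hy; have := PB Hx (PB P0 Hy); by rewrite sub0r opprK. Qed.

Lemma span0 g : inspan g 0.
Proof. elim: g => [|w g IH] //=; exists 0, 0; by rewrite scale0r addr0. Qed.

Lemma spanD g u v : inspan g u -> inspan g v -> inspan g (u + v).
Proof.
elim: g u v => [|w g IH] u v /=; first by move=> -> ->; rewrite addr0.
move=> [c [u' [Pc [Hu ->]]]] [c' [v' [Pc' [Hv ->]]]].
exists (c + c'), (u' + v'); split; first exact: PD.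
split; first exact: IH.
by rewrite scalerDl addrACA.
Qed.

Lemma spanZ g c u : P c -> inspan g u -> inspan g (c *: u).
Proof.
elim: g u => [|w g IH] u Pc /=; first by move=> ->; rewrite scaler0.
move=> [c' [u' [Pc' [Hu ->]]]].
exists (c * c'), (c *: u'); split; first exact: PM.
split; first exact: IH.
by rewrite scalerDr scalerA.
Qed.

Lemma spanN g u : inspan g u -> inspan g (- u).
Proof.
elim: g u => [|w g IH] u /=; first by move=> ->; rewrite oppr0.
move=> [c' [u' [Pc' [Hu ->]]]].
exists (0 - c'), (- u'); split; first exact: PB.
split; first exact: IH.
by rewrite sub0r scaleNr opprD.
Qed.

Lemma spanB g u v : inspan g u -> inspan g v -> inspan g (u - v).
Proof. by move=> Hu Hv; apply: spanD => //; apply: spanN. Qed.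

Lemma spanG g w c : w \in g -> P c -> inspan g (c *: w).
Proof.
elim: g => [|w' g IH] //= ; rewrite inE => /orP [/eqP ->|Hw] Pc.
  by exists c, 0; rewrite addr0; split => //; split => //; apply: span0.
exists 0, (c *: w); rewrite scale0r add0r; split => //; split => //; exact: IH.
Qed.

Lemma addAK (a b : M) : a + b - a = b.
Proof. by rewrite addrC addKr. Qed.

Lemma lin_func g m : inspan g m -> m != 0 ->
  exists psi : M -> R,
    (forall u v, inspan g u -> inspan g v -> psi (u + v) = psi u + psi v) /\
    (forall c u, P c -> inspan g u -> psi (c *: u) = c * psi u) /\
    psi m != 0.
Proof.
elim: g m => [|w g IH] m /=; first by move=> -> /eqP.
move=> [c [u [Pc [Hu Em]]]] m0.
case: (classic (inspan g w)) => Hw.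
  have sub : forall v, inspan (w :: g) v -> inspan g v.
    by move=> v [c' [u' [Pc' [Hu' ->]]]]; apply: spanD => //; apply: spanZ.
  have Hm : inspan g m by apply: sub; exists c, u.
  have [psi [H1 [H2 H3]]] := IH m Hm m0.
  exists psi; split; first by move=> u1 v1 /sub Hu1 /sub Hv1; apply: H1.
  by split => // c1 u1 Pc1 /sub; apply: H2.
pose Q v c := P c /\ exists u, inspan g u /\ v = c *: w + u.
pose coef v := epsilon (inhabits (0 : R)) (Q v).
have uniq : forall c1 c2 u1 u2, P c1 -> P c2 -> inspan g u1 -> inspan g u2 ->
    c1 *: w + u1 = c2 *: w + u2 -> c1 = c2.
  move=> c1 c2 u1 u2 P1 P2 H1 H2 E; apply/eqP; rewrite -subr_eq0; apply/negPn/negP => ne.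
  have [y [Py Ey]] := Pinv (PB P1 P2) ne.
  apply: Hw.
  have -> : w = y *: (u2 - u1).
    have E2 : (c1 - c2) *: w = u2 - u1.
      rewrite scalerBl -[c1 *: w](addrK u1) E; by rewrite addrAC [c2 *: w + u2]addrC addrK.
    by rewrite -E2 scalerA mulrC Ey scale1r.
  by apply: spanZ => //; apply: spanB.
have coefE : forall c1 u1, P c1 -> inspan g u1 -> coef (c1 *: w + u1) = c1.
  move=> c1 u1 P1 H1.
  have : Q (c1 *: w + u1) (coef (c1 *: w + u1)).
    by apply: epsilon_spec; exists c1; split => //; exists u1.
  move=> [Pc' [u' [Hu' E]]]; symmetry; exact: uniq P1 Pc' H1 Hu' E.
case: (eqVneq u 0) => [u0|un0].
  exists coef; split.
    move=> v1 v2 [c1 [u1 [P1 [H1 ->]]]] [c2 [u2 [P2 [H2 ->]]]].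
    rewrite addrACA -scalerDl !coefE //; [exact: PD|exact: spanD].
  split.
    move=> c1 v1 Pc1 [c2 [u2 [P2 [H2 ->]]]].
    rewrite scalerDr scalerA !coefE //; [exact: PM| exact: spanZ].
  rewrite Em u0 addr0 -[c *: w]addr0 coefE //; last exact: span0.
  by apply/eqP => c0; move: m0; rewrite Em u0 c0 scale0r addr0 eqxx.
have [psi [H1 [H2 H3]]] := IH u Hu un0.
exists (fun v => psi (v - coef v *: w)); split.
  move=> v1 v2 [c1 [u1 [P1 [Hv1 ->]]]] [c2 [u2 [P2 [Hv2 ->]]]].
  rewrite addrACA -scalerDl !coefE //; [|exact: PD|exact: spanD].
  by rewrite !addAK; apply: H1.
split.
  move=> c1 v1 Pc1 [c2 [u2 [P2 [H' ->]]]].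
  rewrite scalerDr scalerA !coefE //; [|exact: PM| exact: spanZ].
  by rewrite !addAK; apply: H2.
by rewrite Em coefE // addAK.
Qed.

End Lin.

Lemma nat_min (Pn : nat -> Prop) n : Pn n -> exists k, Pn k /\ forall k', (k' < k)%N -> ~ Pn k'.
Proof.
elim: n {-2}n (leqnn n) => [|N IH] n Hn Pnn.
  exists n; split => // k'; move: Hn; rewrite leqn0 => /eqP ->; by [].
case: (classic (exists k', (k' < n)%N /\ Pn k')) => [[k' [lt Pk]]|H].
  apply: (IH k') => //; rewrite -ltnS; exact: leq_trans lt Hn.
exists n; split => // k' lt Pk; apply: H; by exists k'.
Qed.

Lemma bound_seq (s : seq int) : exists b : int, forall k, k \in s -> b <= k.
Proof.
elim: s => [|x s [b Hb]]; first by exists 0.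
exists (Num.min x b) => k; rewrite inE => /orP [/eqP ->|/Hb]; first by rewrite ge_min lexx.
by move=> H; rewrite ge_min H orbT.
Qed.

Section Main.
Variables (R : idomainType) (Rn : nat -> R -> Prop) (M : lmodType R) (Mz : int -> M -> Prop)
  (K : fieldType) (iota : {rmorphism R -> K}) (S : K -> Prop) (Sq : rat -> K -> Prop).
Hypothesis gdR : graded_decomp (fun _ => True) Rn (fun _ => True).
Hypothesis mulR : forall i j x y, Rn i x -> Rn j y -> Rn (i + j)%N (x * y).
Hypothesis fieldR : degree0_is_field Rn.
Hypothesis gdM : graded_decomp (fun _ => True) Mz (fun _ => True).
Hypothesis actM : forall (n : nat) (z : int) r m, Rn n r -> Mz z m -> Mz (z + n%:Z) (r *: m).
Hypothesis S1 : S 1.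
Hypothesis SB : forall x y, S x -> S y -> S (x - y).
Hypothesis SM : forall x y, S x -> S y -> S (x * y).
Hypothesis Sneg : forall q, q < 0 -> forall x, Sq q x -> x = 0.
Hypothesis gdS : graded_decomp S Sq (fun q => 0 <= q).
Hypothesis SqM : forall q r x y, Sq q x -> Sq r y -> Sq (q + r) (x * y).
Hypothesis Siota : forall (n : nat) r, Rn n r -> Sq n%:R (iota r).

Local Notation cR := (gcomp Rn).
Local Notation cM := (gcomp Mz).
Local Notation cS := (gcomp Sq).

Lemma S0 : S 0.
Proof. by have := SB S1 S1; rewrite subrr. Qed.

Lemma SD x y : S x -> S y -> S (x + y).
Proof. move=> Hx Hy; have := SB Hx (SB S0 Hy); by rewrite sub0r opprK. Qed.

Lemma SqS q x : Sq q x -> S x.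
Proof. by case: gdS => _ [H _]; apply: H. Qed.

Lemma Siota_hom n r : S (iota (cR n r)).
Proof. apply: (@SqS n%:R); apply: Siota; exact: (comp_in gdR _ I). Qed.

Lemma cM_act_hom n s z j : Rn n s -> cM j (s *: z) = s *: cM (j - n%:Z) z.
Proof.
move=> Hs; apply: (comp_shift gdM) => //.
- by move=> x y; rewrite scalerDr.
- by rewrite scaler0.
by move=> k x Hx; apply: actM.
Qed.

Lemma cM_act r z j : exists lr : seq nat, uniq lr /\
  cM j (r *: z) = \sum_(n <- lr) cR n r *: cM (j - n%:Z) z /\
  (forall n, n \notin lr -> cR n r = 0).
Proof.
have [lr [u [E Z]]] := comp_sum gdR (x:=r) I.
exists lr; split => //; split => //.
have -> : r *: z = \sum_(n <- lr) (cR n r *: z) by rewrite {1}E scaler_suml.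
rewrite (comp_bigsum gdM I (fun _ _ _ _ => I)) //; apply: eq_bigr => n _; apply: cM_act_hom; exact: (comp_in gdR _ I).
Qed.

Lemma cS_mul_hom p s y q : Sq p s -> S y -> cS q (s * y) = s * cS (q - p) y.
Proof.
move=> Hs Hy; apply: (comp_shift gdS) => //.
- exact: S0.
- exact: SD.
- by move=> x1 y1; rewrite mulrDr.
- by rewrite mulr0.
by move=> k x Hx; rewrite addrC; apply: SqM.
Qed.

Lemma cS_iota r y q : q < 1 -> S y -> cS q (iota r * y) = iota (cR 0 r) * cS q y.
Proof.
move=> q1 Sy.
have [lr [u [E Z]]] := comp_sum gdR (x:=r) I.
have -> : iota r * y = \sum_(n <- lr) (iota (cR n r) * y) by rewrite {1}E rmorph_sum mulr_suml.
rewrite (comp_bigsum gdS S0 SD); last by move=> n; apply: SM => //; apply: Siota_hom.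
rewrite (@sum_one _ _ _ _ 0%N) //.
- rewrite (@cS_mul_hom 0%:R) //; [by rewrite subr0|apply: Siota; exact: (comp_in gdR _ I)].
- move=> n _ n0; rewrite (@cS_mul_hom n%:R) //; last by apply: Siota; exact: (comp_in gdR _ I).
  rewrite (Sneg _ (comp_in gdS (q - n%:R) Sy)) ?mulr0 //.
  have : (1 <= n%:R :> rat) by rewrite ler1n lt0n.
  move=> H; lra.
by move=> H; rewrite Z // rmorph0 mul0r (comp0 gdS).
Qed.

Lemma cM_min d r z : (forall z j, j < d -> cM j z = 0) -> cM d (r *: z) = cR 0 r *: cM d z.
Proof.
move=> Hd; have [lr [u [-> Z]]] := cM_act r z d.
rewrite (@sum_one _ _ _ _ 0%N) //.
- by rewrite subr0.
- move=> n _ n0; rewrite Hd ?scaler0 //.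
  have : (0 < n)%N by rewrite lt0n.
  move=> H; lia.
by move=> H; rewrite Z // scale0r.
Qed.

Lemma bound_elem z : exists b : int, forall k, cM k z != 0 -> b <= k.
Proof.
have [l [_ [_ Z]]] := comp_sum gdM (x:=z) I.
have [b Hb] := bound_seq l.
exists b => k nz; apply: Hb; apply/negPn/negP => H; move: nz; by rewrite Z // eqxx.
Qed.

Lemma bound_list (L : seq M) : exists b : int, forall g, g \in L -> forall k, cM k g != 0 -> b <= k.
Proof.
elim: L => [|g L [b Hb]]; first by exists 0.
have [b' Hb'] := bound_elem g.
exists (Num.min b' b) => g'; rewrite inE => /orP [/eqP ->|/Hb H] k nz.
  by rewrite ge_min Hb'.
by rewrite ge_min H ?orbT.
Qed.

Lemma bound_all : fg_module M -> exists b : int, forall z j, j < b -> cM j z = 0.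
Proof.
move=> [gens Hg].
have [b Hb] := bound_list gens.
exists b => z j jb.
have [cs ->] := Hg z.
rewrite (comp_bigsum gdM I (fun _ _ _ _ => I)) // big1 // => i _.
have [lr [_ [-> _]]] := cM_act cs`_i gens`_i j.
rewrite big1 // => n _.
suff -> : cM (j - n%:Z) gens`_i = 0 by rewrite scaler0.
apply/eqP; apply/negPn/negP => nz.
have := Hb _ (mem_nth 0 (ltn_ord i)) _ nz.
lia.
Qed.

Lemma min_degree : fg_module M -> (exists m : M, m != 0) ->
  exists d : int, (forall z j, j < d -> cM j z = 0) /\ exists m, Mz d m /\ m != 0.
Proof.
move=> fg [m0 m0nz].
have [b Hb] := bound_all fg.
have [j0 j0nz] : exists j0, cM j0 m0 != 0.
  apply: NNPP => H; move/negP: m0nz; apply.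
  have [l [_ [E _]]] := comp_sum gdM (x:=m0) I.
  rewrite E big1 // => k _; apply/eqP; apply/negPn/negP => nz; apply: H; by exists k.
have bj0 : b <= j0 by rewrite leNgt; apply/negP => /(Hb m0) /eqP; apply/negP.
pose Pn k := exists z, cM (b + k%:Z) z != 0.
have [k [[z zk] Hk]] : exists k, Pn k /\ forall k', (k' < k)%N -> ~ Pn k'.
  apply: (@nat_min Pn `|j0 - b|%N); exists m0.
  have -> : b + (`|j0 - b|%N)%:Z = j0 by lia.
  done.
exists (b + k%:Z); split; last first.
  by exists (cM (b + k%:Z) z); split => //; exact: (comp_in gdM _ I).
move=> z' j jd; case: (ltP j b) => [/(Hb z')|bj] //.
apply/eqP; apply/negPn/negP => nz.
apply: (Hk `|j - b|%N); first by lia.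
exists z'; have -> : b + (`|j - b|%N)%:Z = j by lia.
done.
Qed.

Definition tpts (t : trel R M K) : seq (M * K) :=
  match t with
  | TAddL x1 x2 y => [:: (x1 + x2, y); (x1, y); (x2, y)]
  | TAddR x y1 y2 => [:: (x, y1 + y2); (x, y1); (x, y2)]
  | TScalL r x y => [:: (r *: x, y); (x, y)]
  | TScalR r x y => [:: (x, iota r * y); (x, y)]
  end.

Lemma P0 : Rn 0 0. Proof. exact: (C0 gdR). Qed.
Lemma PB x y : Rn 0 x -> Rn 0 y -> Rn 0 (x - y). Proof. exact: (CB gdR). Qed.
Lemma PM x y : Rn 0 x -> Rn 0 y -> Rn 0 (x * y). Proof. exact: mulR. Qed.
Lemma Pinv x : Rn 0 x -> x != 0 -> exists y, Rn 0 y /\ x * y = 1. Proof. exact: fieldR. Qed.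

Lemma main_contra d m a q : injective iota ->
  (forall z j, j < d -> cM j z = 0) -> Mz d m -> m != 0 ->
  S a -> q < 1 -> cS q a != 0 -> tensor_zero iota S m a -> False.
Proof.
move=> inj Hd Mdm mnz Sa q1 aqnz [s [Hin Hs]].
pose pts := (m, a) :: flatten [seq tpts p.2 | p <- s].
pose T := undup pts.
have uT : uniq T by apply: undup_uniq.
pose G := [seq cM d t.1 | t <- T].
have Gspan : forall t, t \in T -> inspan (Rn 0) G (cM d t.1).
  move=> t tT; rewrite -{1}[t.1]scale1r cM_min //; apply: (spanG P0).
  - by apply/mapP; exists t.
  exact: (comp_in gdR _ I).
have GspanZ : forall c t, t \in T -> inspan (Rn 0) G (cM d (c *: t.1)).
  move=> c t tT; rewrite cM_min //; apply: (spanZ PM); [exact: (comp_in gdR _ I)|exact: Gspan].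
have mT : (m, a) \in T by rewrite mem_undup inE eqxx.
have mspan : inspan (Rn 0) G m.
  by have := Gspan _ mT; rewrite /= (comp_homog gdM d Mdm) eqxx.
have [psi [H1 [H2 H3]]] := lin_func P0 PB PM Pinv mspan mnz.
have psi0 : psi 0 = 0.
  by have := H2 0 0 P0 (span0 P0 G); rewrite scale0r mul0r.
pose Bv c (t : M * K) := iota (psi (cM d (c *: t.1))) * cS q t.2.
have Bv0 : forall t, Bv 0 t = 0 by move=> t; rewrite /Bv scale0r (comp0 gdM) psi0 rmorph0 mul0r.
have BvD : forall c1 c2 t, t \in T -> Bv (c1 + c2) t = Bv c1 t + Bv c2 t.
  move=> c1 c2 t tT; rewrite /Bv scalerDl (comp_add gdM) // H1;
    [by rewrite rmorphD mulrDl|exact: GspanZ|exact: GspanZ].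
have BvM : forall c1 c2 t, t \in T -> Bv (c1 * c2) t = iota (cR 0 c1) * Bv c2 t.
  move=> c1 c2 t tT; rewrite /Bv -scalerA cM_min // H2;
    [by rewrite rmorphM mulrA|exact: (comp_in gdR _ I)|exact: GspanZ].
have BvN : forall c t, t \in T -> Bv (- c) t = - Bv c t.
  move=> c t tT; apply/eqP; rewrite -subr_eq0 opprK -BvD // addNr Bv0 //.
pose Phi (F : M -> K -> R) := \sum_(t <- T) Bv (F t.1 t.2) t.
have PhiB : forall F1 F2, Phi (fun x y => F1 x y - F2 x y) = Phi F1 - Phi F2.
  move=> F1 F2; rewrite /Phi -sumrB big_seq_cond [RHS]big_seq_cond.
  by apply: eq_bigr => t /andP [tT _]; rewrite BvD // BvN.
have PhiM : forall c F, Phi (fun x y => c * F x y) = iota (cR 0 c) * Phi F.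
  move=> c F; rewrite /Phi mulr_sumr big_seq_cond [RHS]big_seq_cond.
  by apply: eq_bigr => t /andP [tT _]; rewrite BvM.
have Phid : forall x y, (x, y) \in T -> Phi (tdelta x y) = Bv 1 (x, y).
  move=> x y xyT; rewrite /Phi (@sum_one _ _ _ _ (x, y)) //=.
  - by rewrite /tdelta !eqxx.
  - move=> [x' y'] _ ne; rewrite /tdelta /=.
    by move: ne; rewrite -xpair_eqE => /negbTE ->; apply: Bv0.
  by rewrite xyT.
have Phis : forall (s' : seq (R * trel R M K)) (G' : R * trel R M K -> M -> K -> R),
    Phi (fun x y => \sum_(p <- s') G' p x y) = \sum_(p <- s') Phi (G' p).
  move=> s' G'; rewrite /Phi exchange_big /= big_seq_cond [RHS]big_seq_cond.
  apply: eq_bigr => t /andP [tT _].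
  by apply: (big_morph (fun c => Bv c t)) => [c1 c2|]; [apply: BvD|apply: Bv0].
have Phiext : forall F1 F2, (forall x y, F1 x y = F2 x y) -> Phi F1 = Phi F2.
  by move=> F1 F2 E; rewrite /Phi; apply: eq_bigr => t _; rewrite E.
have Bv1 : forall x y, Bv 1 (x, y) = iota (psi (cM d x)) * cS q y.
  by move=> x y; rewrite /Bv scale1r.
have rel0 : forall t, trel_in S t -> {subset tpts t <= T} -> Phi (trel_eval iota t) = 0.
  case=> [x1 x2 y|x y1 y2|r x y|r x y] /= Sin sub.
  - rewrite (Phiext _ (fun x' y' => (tdelta (x1 + x2) y x' y' - tdelta x1 y x' y') - tdelta x2 y x' y')) //.
    rewrite !PhiB !Phid ?sub ?inE ?eqxx ?orbT // !Bv1 (comp_add gdM) // H1.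
    + by rewrite rmorphD mulrDl addrAC addrK subrr.
    + by have := Gspan (x1, y); apply; apply: sub; rewrite !inE eqxx ?orbT.
    by have := Gspan (x2, y); apply; apply: sub; rewrite !inE eqxx ?orbT.
  - case: Sin => Sy1 Sy2.
    rewrite (Phiext _ (fun x' y' => (tdelta x (y1 + y2) x' y' - tdelta x y1 x' y') - tdelta x y2 x' y')) //.
    rewrite !PhiB !Phid ?sub ?inE ?eqxx ?orbT // !Bv1 (comp_add gdS) //; last exact: SD.
    by rewrite mulrDr addrAC addrK subrr.
  - rewrite (Phiext _ (fun x' y' => tdelta (r *: x) y x' y' - r * tdelta x y x' y')) //.
    rewrite PhiB PhiM !Phid ?sub ?inE ?eqxx ?orbT // !Bv1 cM_min // H2.
    + by rewrite rmorphM mulrA subrr.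
    + exact: (comp_in gdR _ I).
    by have := Gspan (x, y); apply; apply: sub; rewrite !inE eqxx ?orbT.
  - rewrite (Phiext _ (fun x' y' => tdelta x (iota r * y) x' y' - r * tdelta x y x' y')) //.
    rewrite PhiB PhiM !Phid ?sub ?inE ?eqxx ?orbT // !Bv1 cS_iota //.
    by rewrite mulrCA subrr.
have Hall : forall s' : seq (R * trel R M K),
    foldr (fun p P => trel_in S p.2 /\ P) True s' ->
    {subset flatten [seq tpts p.2 | p <- s'] <= T} ->
    \sum_(p <- s') iota (cR 0 p.1) * Phi (trel_eval iota p.2) = 0.
  elim=> [|p s' IH] /=; first by rewrite big_nil.
  move=> [Hp Hs'] sub; rewrite big_cons rel0 ?mulr0 ?add0r //.
  - apply: IH => // t Ht; apply: sub; by rewrite mem_cat Ht orbT.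
  by move=> t Ht; apply: sub; rewrite mem_cat Ht.
have : Phi (tdelta m a) = 0.
  rewrite (Phiext _ _ Hs) Phis.
  rewrite -[RHS](Hall s Hin); last by move=> t Ht; rewrite mem_undup inE Ht orbT.
  by apply: eq_bigr => p _; rewrite PhiM.
rewrite Phid // Bv1 (comp_homog gdM d Mdm) eqxx.
apply/eqP; rewrite mulf_eq0 negb_or aqnz andbT.
apply/negP => /eqP E; move/eqP: H3; apply.
by apply: inj; rewrite E rmorph0.
Qed.

End Main.

Theorem proposition2p11 (R : idomainType) (Rn : nat -> R -> Prop)
    (M : lmodType R) (Mz : int -> M -> Prop)
    (K : closedFieldType) (iota : {rmorphism R -> K})
    (S : K -> Prop) (Sq : rat -> K -> Prop) :
  Ngraded_ring Rn -> degree0_is_field Rn -> fg_over_degree0 Rn ->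
  Zgraded_module Rn Mz -> fg_module M -> (exists m : M, m != 0) ->
  injective iota -> algebraic_over iota ->
  max_Qgraded_ext iota Rn S Sq ->
  ~ (forall m : M, almost_zero iota S Sq m).
Proof.
move=> [gdR mulR] fieldR _ [gdM actM] fg Mnz inj _.
move=> [[_ [S1 [SB [SM [Sneg [gdS [SqM Siota]]]]]]] _] Haz.
have [d [Hd [m [Mdm mnz]]]] := min_degree gdR gdM actM fg Mnz.
have [a [Sa [_ [[q [[l [f [u [Cf [E [ql [fq _]]]]]]] q1]] tz]]]] := Haz m 1 ltr01.
apply: (main_contra gdR mulR fieldR gdM actM S1 SB SM Sneg gdS SqM Siota inj Hd Mdm mnz Sa q1 _ tz).
by rewrite (comp_spec gdS Sa u Cf E q) /ext ql.
Qed.
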